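(* Let $T,R,K>0$, $I\ge2$, and let the data $a_i,b_i,c_i,f_i\in W^{1,\infty}([0,T]\times[0,R]\times[0,K])$, $\alpha_i\in W^{1,\infty}([0,T]\times[0,K],\mathbb{R}_+)$, $r\in W^{1,\infty}([0,T]\times[0,K],\mathbb{R}_+)$, $\phi\in W^{1,\infty}([0,T]\times[0,K])$, $\psi$, $g$ satisfy the assumptions listed in the context (in particular $a_i\ge\underline{a}>0$, $\alpha_i\ge\underline{\alpha}>0$, $r\ge0$). Let $u,v\in\mathfrak{C}^{1,2,0}_{\{0\}}(\Omega_T)$ where $u$ is a super solution and $v$ a sub solution, i.e. for all $i$: $$\partial_tu_i-a_i\partial_x^2u_i+b_i\partial_xu_i+c_iu_i-f_i\ge0\ (\text{resp. for }v:\le 0)\ \text{on }(0,T)\times(0,R)\times(0,K),$$ $$\partial_lu(t,0,l)+\sum_{i=1}^I\alpha_i(t,l)\partial_xu_i(t,0,l)-r(t,l)u(t,0,l)-\phi(t,l)\le0\ (\text{resp. for }v:\ge0),\quad (t,l)\in(0,T)\times(0,K),$$ $$\partial_xu_i(t,R,l)\ge0\ (\text{resp. for }v:\le0),\quad (t,l)\in(0,T)\times(0,K).$$ Assume moreover that $u_i(0,x,l)\ge v_i(0,x,l)$ and $u_i(t,x,K)\ge v_i(t,x,K)$ for all $i\in\{1,\dots,I\}$, $t\in[0,T]$, $x\in[0,R]$, $l\in[0,K]$. Then $u_i(t,x,l)\ge v_i(t,x,l)$ for all $i$ and all $(t,x,l)\in[0,T]\times[0,R]\times[0,K]$.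
   Context: $\mathcal{N}_R$ is the star network of $I$ copies of $[0,R]$ glued at $0$; a function on $[0,T]\times\mathcal{N}_R\times[0,K]$ is a family $(h_i)_{i=1}^I$, $h_i:[0,T]\times[0,R]\times[0,K]\to\mathbb{R}$, with $h_i(t,0,l)=h_j(t,0,l)=:h(t,0,l)$. $\Omega_T=(0,T)\times\mathring{\mathcal{N}}_R\times(0,K)$. The class $\mathfrak{C}^{1,2,0}_{\{0\}}(\Omega_T)$ consists of such families that are continuous at the junction, with each $h_i$ continuous on $[0,T]\times[0,R]\times[0,K]$ and continuously differentiable in $x$ on $[0,T]\times[0,R]\times[0,K)$, of class $\mathcal{C}^{1,2,0}$ (one continuous $t$-derivative, two continuous $x$-derivatives) on $(0,T)\times(0,R)\times(0,K)$ with $\partial_th_i,\partial_x^2h_i$ bounded there, with $(t,l)\mapsto h(t,0,l)$ in $\mathcal{C}^{0,1}([0,T]\times[0,K))$ (continuously differentiable in $l$), and with each $h_i$ having a generalized $l$-derivative in $\bigcap_{q\in(1,\infty)}L^q$. Standing assumption on the data (called $(\mathcal{H})$ in the paper): $a_i\ge\underline{a}>0$, $\alpha_i\ge\underline{\alpha}>0$; $\psi$ continuous on $[0,T]\times\mathcal{N}_R$, $\mathcal{C}^{0,1}$ on each closed ray and $\mathcal{C}^{1,2}$ inside; $g=(g_i)$ Lipschitz, continuous at the junction, twice differentiable in $x$, with $l\mapsto g(0,l)$ differentiable; compatibility: $\partial_lg(0,l)+\sum_i\alpha_i(0,l)\partial_xg_i(0,l)-r(0,l)g(0,l)=\phi(0,l)$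 for $l\in[0,K)$, $\partial_xg_i(R,l)=0$ for $l\in[0,K)$, $g_i(x,K)=\psi_i(0,x)$. *)

(* Defs.v *)
From HB Require Import structures.
From mathcomp Require Import all_boot all_order all_algebra.
From mathcomp Require Import all_classical all_reals all_analysis.
Set Implicit Arguments. Unset Strict Implicit. Unset Printing Implicit Defensive.
Import Order.TTheory GRing.Theory Num.Theory.
Local Open Scope classical_set_scope.
Local Open Scope ring_scope.

(* f has derivative d at x relative to D (D will always be an interval with
   nonempty interior containing x). *)
Definition has_deriv_within {R : realType} (D : set R) (f : R -> R) (x d : R) : Prop :=
  forall e : R, 0 < e -> exists2 del : R, 0 < del &
    forall y, D y -> `|y - x| < del -> `|f y - f x - d * (y - x)| <= e * `|y - x|.

Definition itv_cc {R : realType} (a b : R) : set R := [set y | a <= y <= b].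
Definition itv_oo {R : realType} (a b : R) : set R := [set y | a < y < b].
Definition itv_co {R : realType} (a b : R) : set R := [set y | a <= y < b].

Definition cont_on3 {R : realType} (D : R -> R -> R -> Prop) (f : R -> R -> R -> R) : Prop :=
  forall t x l, D t x l -> forall e : R, 0 < e -> exists2 del : R, 0 < del &
    forall t' x' l', D t' x' l' -> `|t' - t| < del -> `|x' - x| < del -> `|l' - l| < del ->
      `|f t' x' l' - f t x l| < e.

Definition cont_on2 {R : realType} (D : R -> R -> Prop) (f : R -> R -> R) : Prop :=
  forall t l, D t l -> forall e : R, 0 < e -> exists2 del : R, 0 < del &
    forall t' l', D t' l' -> `|t' - t| < del -> `|l' - l| < del -> `|f t' l' - f t l| < e.

(* W^{1,oo} on a (convex, bounded) box = Lipschitz continuous functions *)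
Definition lipschitz3 {R : realType} (D : R -> R -> R -> Prop) (f : R -> R -> R -> R) : Prop :=
  exists L : R, forall t x l t' x' l', D t x l -> D t' x' l' ->
    `|f t' x' l' - f t x l| <= L * (`|t' - t| + `|x' - x| + `|l' - l|).

Definition lipschitz2 {R : realType} (D : R -> R -> Prop) (f : R -> R -> R) : Prop :=
  exists L : R, forall t l t' l', D t l -> D t' l' ->
    `|f t' l' - f t l| <= L * (`|t' - t| + `|l' - l|).

Definition box_cc {R : realType} (T Rad K : R) (t x l : R) : Prop :=
  itv_cc 0 T t /\ itv_cc 0 Rad x /\ itv_cc 0 K l.
Definition box_ccco {R : realType} (T Rad K : R) (t x l : R) : Prop :=
  itv_cc 0 T t /\ itv_cc 0 Rad x /\ itv_co 0 K l.
Definition box_oo {R : realType} (T Rad K : R) (t x l : R) : Prop :=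
  itv_oo 0 T t /\ itv_oo 0 Rad x /\ itv_oo 0 K l.
Definition rect_cc {R : realType} (T K : R) (t l : R) : Prop := itv_cc 0 T t /\ itv_cc 0 K l.
Definition rect_co {R : realType} (T K : R) (t l : R) : Prop := itv_cc 0 T t /\ itv_co 0 K l.

Definition partial3 {R : realType} (k : nat) (f : R -> R -> R -> R) : R -> R -> R -> R :=
  fun t x l => match k with
               | 0%N => derive1 (fun s => f s x l) t
               | 1%N => derive1 (fun y => f t y l) x
               | _ => derive1 (fun m => f t x m) l
               end.

Definition derivable3 {R : realType} (k : nat) (f : R -> R -> R -> R) (t x l : R) : Prop :=
  match k with
  | 0%N => derivable (fun s => f s x l) t 1
  | 1%N => derivable (fun y => f t y l) x 1
  | _ => derivable (fun m => f t x m) l 1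
  end.

Definition smooth3 {R : realType} (phi : R -> R -> R -> R) : Prop :=
  forall s : seq nat, let g := foldr partial3 phi s in
    (forall k t x l, derivable3 k g t x l) /\ cont_on3 (fun _ _ _ => True) g.

Definition test_fun {R : realType} (T Rad K : R) (phi : R -> R -> R -> R) : Prop :=
  smooth3 phi /\ exists2 d : R, 0 < d & forall t x l,
    ~ (d <= t <= T - d /\ d <= x <= Rad - d /\ d <= l <= K - d) -> phi t x l = 0.

Definition mu3 {R : realType} :=
  ((@lebesgue_measure R \x @lebesgue_measure R) \x @lebesgue_measure R)%E.

Definition unc3 {R : realType} (f : R -> R -> R -> R) : (R * R) * R -> R :=
  fun p => f p.1.1 p.1.2 p.2.

Definition Omega3 {R : realType} (T Rad K : R) : set ((R * R) * R) :=
  [set p | box_oo T Rad K p.1.1 p.1.2 p.2].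

Definition weak_dl {R : realType} (T Rad K : R) (h w : R -> R -> R -> R) : Prop :=
  forall phi, test_fun T Rad K phi ->
    (\int[mu3]_(p in Omega3 T Rad K) (unc3 h p * unc3 (partial3 2 phi) p)%:E
     = - \int[mu3]_(p in Omega3 T Rad K) (unc3 w p * unc3 phi p)%:E)%E.

Definition in_all_Lq {R : realType} (T Rad K : R) (w : R -> R -> R -> R) : Prop :=
  forall q : R, 1 < q ->
    measurable_fun (Omega3 T Rad K) (unc3 w) /\
    (\int[mu3]_(p in Omega3 T Rad K) (powR `|unc3 w p| q)%:E < +oo)%E.

(* ---------- the class C^{1,2,0}_{0}(Omega_T) of families (h_i)_{i<I},
   with the (unique) derivatives given explicitly:
   ht = d_t h, hx = d_x h, hxx = d_x^2 h, hl = d_l of (t,l) |-> h(t,0,l).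
   Indices i range over {0,...,I-1} (0-based). *)
Definition C120 {R : realType} (I : nat) (T Rad K : R)
    (h ht hx hxx : nat -> R -> R -> R -> R) (hl : R -> R -> R) : Prop :=
  (forall i j t l, (i < I)%N -> (j < I)%N -> rect_cc T K t l -> h i t 0 l = h j t 0 l) /\
  (forall i, (i < I)%N -> cont_on3 (box_cc T Rad K) (h i)) /\
  (forall i, (i < I)%N ->
     (forall t x l, box_ccco T Rad K t x l ->
        has_deriv_within (itv_cc 0 Rad) (fun y => h i t y l) x (hx i t x l)) /\
     cont_on3 (box_ccco T Rad K) (hx i)) /\
  (forall i, (i < I)%N ->
     (forall t x l, box_oo T Rad K t x l ->
        has_deriv_within (itv_oo 0 T) (fun s => h i s x l) t (ht i t x l) /\
        has_deriv_within (itv_oo 0 Rad) (fun y => hx i t y l) x (hxx i t x l)) /\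
     cont_on3 (box_oo T Rad K) (h i) /\
     cont_on3 (box_oo T Rad K) (ht i) /\
     cont_on3 (box_oo T Rad K) (hx i) /\
     cont_on3 (box_oo T Rad K) (hxx i) /\
     (exists M : R, forall t x l, box_oo T Rad K t x l ->
        `|ht i t x l| <= M /\ `|hxx i t x l| <= M)) /\
  (cont_on2 (rect_co T K) (fun t l => h 0%N t 0 l) /\
   (forall t l, rect_co T K t l ->
      has_deriv_within (itv_co 0 K) (fun m => h 0%N t 0 m) l (hl t l)) /\
   cont_on2 (rect_co T K) hl) /\
  (forall i, (i < I)%N -> exists w, weak_dl T Rad K (h i) w /\ in_all_Lq T Rad K w).

Definition psi_assump {R : realType} (I : nat) (T Rad : R) (psi : nat -> R -> R -> R) : Prop :=
  (forall i j t, (i < I)%N -> (j < I)%N -> itv_cc 0 T t -> psi i t 0 = psi j t 0) /\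
  forall i, (i < I)%N -> exists psit psix psixx : R -> R -> R,
    [/\ cont_on2 (rect_cc T Rad) (psi i),
        forall t x, rect_cc T Rad t x ->
          has_deriv_within (itv_cc 0 Rad) (fun y => psi i t y) x (psix t x),
        cont_on2 (rect_cc T Rad) psix,
        forall t x, itv_oo 0 T t -> itv_oo 0 Rad x ->
          has_deriv_within (itv_oo 0 T) (fun s => psi i s x) t (psit t x) /\
          has_deriv_within (itv_oo 0 Rad) (fun y => psix t y) x (psixx t x) &
        cont_on2 (fun t x => itv_oo 0 T t /\ itv_oo 0 Rad x) psit /\
        cont_on2 (fun t x => itv_oo 0 T t /\ itv_oo 0 Rad x) psixx].

Definition g_assump {R : realType} (I : nat) (T Rad K : R)
    (alpha : nat -> R -> R -> R) (r phi : R -> R -> R)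
    (psi g : nat -> R -> R -> R) : Prop :=
  (forall i, (i < I)%N -> lipschitz2 (rect_cc Rad K) (g i)) /\
  (forall i j l, (i < I)%N -> (j < I)%N -> itv_cc 0 K l -> g i 0 l = g j 0 l) /\
  exists (gx gxx : nat -> R -> R -> R) (gl : R -> R),
    [/\ forall i x l, (i < I)%N -> rect_cc Rad K x l ->
          has_deriv_within (itv_cc 0 Rad) (fun y => g i y l) x (gx i x l) /\
          has_deriv_within (itv_cc 0 Rad) (fun y => gx i y l) x (gxx i x l),
        forall l, itv_cc 0 K l -> has_deriv_within (itv_cc 0 K) (fun m => g 0%N 0 m) l (gl l),
        forall l, itv_co 0 K l ->
          gl l + \sum_(i < I) alpha i 0 l * gx i 0 l - r 0 l * g 0%N 0 l = phi 0 l,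
        forall i l, (i < I)%N -> itv_co 0 K l -> gx i Rad l = 0 &
        forall i x, (i < I)%N -> itv_cc 0 Rad x -> g i x K = psi i 0 x].

Definition data_assump {R : realType} (I : nat) (T Rad K : R)
    (a b c f : nat -> R -> R -> R -> R) (alpha : nat -> R -> R -> R)
    (r phi : R -> R -> R) (psi g : nat -> R -> R -> R) (abar alphabar : R) : Prop :=
  (forall i, (i < I)%N ->
     [/\ lipschitz3 (box_cc T Rad K) (a i), lipschitz3 (box_cc T Rad K) (b i),
         lipschitz3 (box_cc T Rad K) (c i) & lipschitz3 (box_cc T Rad K) (f i)]) /\
  (forall i, (i < I)%N -> lipschitz2 (rect_cc T K) (alpha i)) /\
  (lipschitz2 (rect_cc T K) r /\ lipschitz2 (rect_cc T K) phi) /\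
  (0 < abar /\ (forall i t x l, (i < I)%N -> box_cc T Rad K t x l -> abar <= a i t x l)) /\
  (0 < alphabar /\ (forall i t l, (i < I)%N -> rect_cc T K t l -> alphabar <= alpha i t l)) /\
  (forall i t l, (i < I)%N -> rect_cc T K t l -> 0 <= alpha i t l) /\
  (forall t l, rect_cc T K t l -> 0 <= r t l) /\
  psi_assump I T Rad psi /\
  g_assump I T Rad K alpha r phi psi g.

(* Main.v *)
Require Import Defs.
From HB Require Import structures.
From mathcomp Require Import all_boot all_order all_algebra.
From mathcomp Require Import all_classical all_reals all_analysis.
From mathcomp Require Import ring lra.
Import Order.TTheory GRing.Theory Num.Theory.
Local Open Scope ring_scope.

Module Helpers.
Set Implicit Arguments. Unset Strict Implicit.
Import numFieldNormedType.Exports.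
Section X.
Variable R : realType.
Lemma isd_hd (D : set R) (f : R -> R) (x d : R) : is_derive x 1 f d -> has_deriv_within D f x d.
Proof.
move=> [H1 H2] e e0.
have : ((fun h : R => h^-1 *: ((f \o shift x) (h *: 1) - f x)) @ 0^' --> d)%classic.
  by rewrite -H2; exact: H1.
move/cvgrPdist_le => /(_ e e0).
move=> /nbhs_ballP [del del0 Hb].
exists del => // y _ hy.
have [->|hne] := eqVneq y x; first by rewrite !subrr !(mulr0, normr0, subr0).
have hne' : y - x != 0 by rewrite subr_eq0.
have hb : ball 0 del (y - x) by rewrite /ball /= sub0r normrN.
have := Hb (y - x) hb hne'.
rewrite /= [_%:A]mulr1 subrK => H.
have -> : f y - f x - d * (y - x) = - ((y - x) * (d - (y - x)^-1 * (f y - f x))).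
  by field.
rewrite normrN normrM mulrC; apply: ler_wpM2r => //.
Qed.


Lemma hd_isd (D : set R) (f : R -> R) (x d : R) :
  (exists2 eta : R, 0 < eta & forall y, `|y - x| < eta -> D y) ->
  has_deriv_within D f x d -> is_derive x 1 f d.
Proof.
move=> [eta eta0 HD] Hd.
have Hc : ((fun h : R => h^-1 *: ((f \o shift x) (h *: 1) - f x)) @ 0^' --> d)%classic.
  apply/cvgrPdist_le => e e0.
  have [del del0 H] := Hd e e0.
  apply/nbhs_ballP; exists (Num.min eta del); first by rewrite /= lt_min eta0 del0.
  move=> h; rewrite /ball /= sub0r normrN lt_min => /andP[h1 h2] hne.
  rewrite [_ *: 1]mulr1.
  have hh : `|h + x - x| < eta by rewrite addrK.
  have hh' : `|h + x - x| < del by rewrite addrK.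
  have := H (h + x) (HD _ hh) hh'.
  rewrite addrK => H'.
  have -> : d - h^-1 *: (f (h + x) - f x) = - (h^-1 * (f (h + x) - f x - d * h)).
    rewrite /GRing.scale /=. by field.
  rewrite normrN normrM normfV.
  by rewrite ler_pdivrMl ?normr_gt0 // [`|h| * e]mulrC.
have Hd1 : derivable f x 1 by apply/cvgP: Hc.
apply: (@DeriveDef _ _ _ _ _ _ _ Hd1).
exact: cvg_lim.
Qed.
Lemma hd_add (D : set R) (f g : R -> R) (x df dg : R) :
  has_deriv_within D f x df -> has_deriv_within D g x dg ->
  has_deriv_within D (fun y => f y + g y) x (df + dg).
Proof.
move=> Hf Hg e e0.
have e20 : 0 < e / 2 by rewrite divr_gt0.
have [d1 d10 H1] := Hf _ e20. have [d2 d20 H2] := Hg _ e20.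
exists (Num.min d1 d2); first by rewrite lt_min d10 d20.
move=> y Dy; rewrite lt_min => /andP[y1 y2].
have := H1 _ Dy y1; have := H2 _ Dy y2.
move=> hB hA.
have -> : f y + g y - (f x + g x) - (df + dg) * (y - x)
   = (f y - f x - df * (y - x)) + (g y - g x - dg * (y - x)) by ring.
apply: (le_trans (ler_normD _ _)).
have -> : e * `|y - x| = e / 2 * `|y - x| + e / 2 * `|y - x| by field.
exact: lerD.
Qed.

Lemma hd_scale (D : set R) (f : R -> R) (k x df : R) :
  has_deriv_within D f x df ->
  has_deriv_within D (fun y => k * f y) x (k * df).
Proof.
move=> Hf e e0.
have k0 : 0 < `|k| + 1 by rewrite ltr_wpDl.
have [d1 d10 H1] := Hf (e / (`|k| + 1)) (divr_gt0 e0 k0).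
exists d1 => // y Dy hy.
have := H1 _ Dy hy => H.
have -> : k * f y - k * f x - k * df * (y - x) = k * (f y - f x - df * (y - x)) by ring.
rewrite normrM.
apply: (le_trans (ler_wpM2l (normr_ge0 k) H)).
rewrite mulrA ler_wpM2r // mulrCA.
apply: ler_piMr; first exact: ltW.
by rewrite ler_pdivrMr // mul1r lerDl.
Qed.

Lemma hd_const (D : set R) (c x : R) : has_deriv_within D (fun _ => c) x 0.
Proof.
move=> e e0; exists 1 => // y _ _.
by rewrite subrr mul0r subrr normr0 mulr_ge0 // ltW.
Qed.

Lemma hd_sq (D : set R) (x : R) : has_deriv_within D (fun y => y ^+ 2) x (2 * x).
Proof.
move=> e e0; exists e => // y _ hy.
have -> : y ^+ 2 - x ^+ 2 - 2 * x * (y - x) = (y - x) * (y - x) by ring.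
rewrite normrM; apply: ler_wpM2r => //; exact: ltW.
Qed.

Lemma hd_max_right (D : set R) (f : R -> R) (x d : R) : has_deriv_within D f x d ->
  (forall del, 0 < del -> exists y, [/\ D y, x < y & y - x < del]) ->
  (forall y, D y -> x < y -> f y <= f x) -> d <= 0.
Proof.
move=> Hd Hex Hmax; rewrite leNgt; apply/negP => d0.
have [del del0 H] := Hd (d/2) (divr_gt0 d0 (ltr0Sn _ 1)).
have [y [Dy xy yd]] := Hex _ del0.
have hyx : 0 < y - x by rewrite subr_gt0.
have hn : `|y - x| < del by rewrite gtr0_norm.
have := H y Dy hn.
rewrite [`|y - x|]gtr0_norm // ler_norml => /andP[h2 h3].
have := Hmax y Dy xy.
nra.
Qed.

Lemma hd_max_left (D : set R) (f : R -> R) (x d : R) : has_deriv_within D f x d ->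
  (forall del, 0 < del -> exists y, [/\ D y, y < x & x - y < del]) ->
  (forall y, D y -> y < x -> f y <= f x) -> 0 <= d.
Proof.
move=> Hd Hex Hmax; rewrite leNgt; apply/negP => d0.
have d0' : 0 < - d by rewrite oppr_gt0.
have [del del0 H] := Hd (- d/2) (divr_gt0 d0' (ltr0Sn _ 1)).
have [y [Dy xy yd]] := Hex _ del0.
have hyx : y - x < 0 by rewrite subr_lt0.
have hn : `|y - x| < del by rewrite ltr0_norm // opprB.
have := H y Dy hn.
rewrite [`|y - x|]ltr0_norm // ler_norml => /andP[h2 h3].
have := Hmax y Dy xy.
nra.
Qed.
Lemma itv_oo_nbhs (a b y : R) : a < y < b ->
  exists2 eta : R, 0 < eta & forall z, `|z - y| < eta -> itv_oo a b z.
Proof.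
move=> /andP[ay yb]; exists (Num.min (y - a) (b - y)).
  by rewrite lt_min !subr_gt0 ay yb.
move=> z; rewrite lt_min => /andP[h1 h2]; rewrite /itv_oo /=.
move: h1 h2; rewrite !ltr_norml => /andP[h1 h1'] /andP[h2 h2'].
apply/andP; split; lra.
Qed.

Lemma hd_max2 (a b : R) (g g1 : R -> R) (x d2 : R) :
  a < x < b ->
  (forall y, a < y < b -> has_deriv_within (itv_oo a b) g y (g1 y)) ->
  has_deriv_within (itv_oo a b) g1 x d2 ->
  (forall y, a < y < b -> g y <= g x) ->
  g1 x = 0 /\ d2 <= 0.
Proof.
move=> /andP[ax xb] Hg Hg1 Hmax.
have axb : a < x < b by rewrite ax xb.
have g1le : g1 x <= 0.
  apply: (@hd_max_right (itv_oo a b) g x (g1 x) (Hg x axb)).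
    move=> del del0; exists (x + Num.min del (b - x) / 2).
    have m0 : 0 < Num.min del (b - x) by rewrite lt_min del0 subr_gt0 xb.
    have m1 : Num.min del (b - x) <= del by rewrite ge_min lexx.
    have m2 : Num.min del (b - x) <= b - x by rewrite ge_min lexx orbT.
    split; rewrite /itv_oo /=; try (apply/andP; split); lra.
  by move=> y /andP[ay yb] _; apply: Hmax; rewrite ay yb.
have g1ge : 0 <= g1 x.
  apply: (@hd_max_left (itv_oo a b) g x (g1 x) (Hg x axb)).
    move=> del del0; exists (x - Num.min del (x - a) / 2).
    have m0 : 0 < Num.min del (x - a) by rewrite lt_min del0 subr_gt0 ax.
    have m1 : Num.min del (x - a) <= del by rewrite ge_min lexx.
    have m2 : Num.min del (x - a) <= x - a by rewrite ge_min lexx orbT.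
    split; rewrite /itv_oo /=; try (apply/andP; split); lra.
  by move=> y /andP[ay yb] _; apply: Hmax; rewrite ay yb.
have g10 : g1 x = 0 by apply/eqP; rewrite eq_le g1le g1ge.
split => //.
rewrite leNgt; apply/negP => d20.
have [del del0 H] := Hg1 (d2/2) (divr_gt0 d20 (ltr0Sn _ 1)).
set m := Num.min del (b - x).
have m0 : 0 < m by rewrite lt_min del0 subr_gt0 xb.
have m1 : m <= del by rewrite ge_min lexx.
have m2 : m <= b - x by rewrite ge_min lexx orbT.
set y1 := x + m / 2.
have xy1 : x < y1 by rewrite /y1; lra.
have pos : forall c, x < c < y1 -> 0 < g1 c.
  move=> c /andP[xc cy]; rewrite /y1 in cy.
  have Dc : itv_oo a b c by rewrite /itv_oo /=; apply/andP; split; lra.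
  have hc : `|c - x| < del by rewrite gtr0_norm ?subr_gt0 //; lra.
  have := H c Dc hc.
  rewrite g10 [`|c - x|]gtr0_norm ?subr_gt0 // ler_norml => /andP[h1 h2].
  have : 0 < d2 * (c - x) by rewrite mulr_gt0 // subr_gt0.
  lra.
have inab : forall c, x <= c <= y1 -> a < c < b.
  move=> c /andP[h1 h2]; apply/andP; split; rewrite /y1 in h2; lra.
have Hd : forall c, c \in `]x, y1[ -> is_derive c 1 g (g1 c).
  move=> c; rewrite in_itv /= => /andP[h1 h2].
  have hc : a < c < b by apply: inab; rewrite !ltW.
  exact: (@hd_isd (itv_oo a b) g c (g1 c) (@itv_oo_nbhs a b c hc) (Hg c hc)).
have Hcont : {within `[x, y1], continuous g}%classic.
  apply: continuous_in_subspaceT => c; rewrite inE /= in_itv /= => hc.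
  have hc' := inab c hc.
  have hd := @hd_isd (itv_oo a b) g c (g1 c) (@itv_oo_nbhs a b c hc') (Hg c hc').
  apply: differentiable_continuous; apply/derivable1_diffP.
  by case: hd.
have [c cI Hc] := MVT xy1 Hd Hcont.
have gc := pos c cI.
have := pos c cI.
have hy1 : x <= y1 <= y1 by rewrite lexx ltW.
have := Hmax y1 (inab y1 hy1).
have : 0 < g1 c * (y1 - x) by apply: mulr_gt0 => //; rewrite subr_gt0.
lra.
Qed.
Lemma cont3_within (D : R -> R -> R -> Prop) (f : R -> R -> R -> R) (A : set ((R*R)*R)) :
  cont_on3 D f -> (forall p, A p -> D p.1.1 p.1.2 p.2) -> {within A, continuous (unc3 f)}%classic.
Proof.
move=> Hc HA; apply/subspace_continuousP => p Ap.
apply/cvgrPdist_lt => e e0.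
have [del del0 H] := Hc _ _ _ (HA p Ap) e e0.
apply/nbhs_ballP; exists del => //= q Bq Aq.
move: Bq; rewrite /ball /= /prod_ball /= => -[[b1 b2] b3].
rewrite /from_subspace /unc3 distrC.
by apply: H; [exact: HA | rewrite distrC | rewrite distrC | rewrite distrC].
Qed.
Definition zf (lam eps K : R) (u v : R -> R -> R -> R) : (R*R)*R -> R :=
  fun p => expR (- lam * p.1.1) * (unc3 v p - unc3 u p) - eps * (K + 1 - p.2 + p.1.2 ^+ 2).

Lemma zf_cont (A : set ((R*R)*R)) lam eps K u v :
  {within A, continuous (unc3 u)}%classic -> {within A, continuous (unc3 v)}%classic ->
  {within A, continuous (zf lam eps K u v)}%classic.
Proof.
move=> cu cv.
have c11 : {within A, continuous (fun p : (R*R)*R => p.1.1)}%classic.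
  apply: continuous_subspaceT => p.
  apply: (@continuous_comp _ _ _ fst fst); exact: cvg_fst.
have c12 : {within A, continuous (fun p : (R*R)*R => p.1.2)}%classic.
  apply: continuous_subspaceT => p.
  apply: (@continuous_comp _ _ _ fst snd); [exact: cvg_fst | exact: cvg_snd].
have c2 : {within A, continuous (fun p : (R*R)*R => p.2)}%classic.
  apply: continuous_subspaceT => p; exact: cvg_snd.
move=> p.
have -> : zf lam eps K u v = ((expR \o (fun p : (R*R)*R => - lam * p.1.1)) \* (unc3 v - unc3 u))
   - ((fun _ => eps) \* ((fun _ => K + 1) - (fun p : (R*R)*R => p.2) + ((fun p : (R*R)*R => p.1.2) \* (fun p : (R*R)*R => p.1.2)))).
  by apply/funext => q; rewrite /zf /= expr2.
apply: continuousB; apply: continuousM.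
- apply: continuous_comp; last exact: continuous_expR.
  apply: continuousM; [exact: cst_continuous | exact: c11].
- apply: continuousB; [exact: cv | exact: cu].
- exact: cst_continuous.
- apply: continuousD; first apply: continuousB.
  + exact: cst_continuous.
  + exact: c2.
  + apply: continuousM; exact: c12.
Qed.
Definition boxA (t1 t2 x1 x2 l1 l2 : R) : set ((R*R)*R) :=
  fun p => [/\ t1 <= p.1.1 <= t2, x1 <= p.1.2 <= x2 & l1 <= p.2 <= l2].

Lemma evt_box (F : (R*R)*R -> R) t1 t2 x1 x2 l1 l2 :
  t1 <= t2 -> x1 <= x2 -> l1 <= l2 ->
  {within boxA t1 t2 x1 x2 l1 l2, continuous F}%classic ->
  exists2 p, boxA t1 t2 x1 x2 l1 l2 p & forall q, boxA t1 t2 x1 x2 l1 l2 q -> F q <= F p.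
Proof.
move=> ht hx hl cF.
have eA : boxA t1 t2 x1 x2 l1 l2 = ((`[t1, t2] `*` `[x1, x2]) `*` `[l1, l2])%classic.
  apply/funext => p; apply/propext; rewrite /boxA /=.
  by rewrite !in_itv /=; split; [case=> -> -> -> | case=> [[-> ->] ->]].
have cA : compact (boxA t1 t2 x1 x2 l1 l2).
  rewrite eA; apply: compact_setX; [apply: compact_setX|]; exact: segment_compact.
have nA : (boxA t1 t2 x1 x2 l1 l2 !=set0)%classic.
  by exists ((t1, x1), l1); rewrite /boxA /= !lexx ht hx hl.
have [p pA Hp] := compact_EVT_max nA cA cF.
exists p; first by move: pA; rewrite inE.
by move=> q qA; apply: Hp; rewrite inE.
Qed.
Lemma hd_sub (D D' : set R) (f : R -> R) (x d : R) :
  (forall y, D' y -> D y) -> has_deriv_within D f x d -> has_deriv_within D' f x d.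
Proof.
move=> HD H e e0; have [del del0 Hd] := H e e0.
by exists del => // y /HD; apply: Hd.
Qed.

Lemma hd_ext (D : set R) (f g : R -> R) (x d d' : R) :
  (forall y, f y = g y) -> d = d' -> has_deriv_within D f x d -> has_deriv_within D g x d'.
Proof.
move=> fg <- H e e0; have [del del0 Hd] := H e e0.
by exists del => // y Dy hy; rewrite -!fg; apply: Hd.
Qed.

Lemma hd_id (D : set R) (x : R) : has_deriv_within D (fun y => y) x 1.
Proof.
move=> e e0; exists 1 => // y _ _.
by rewrite mul1r subrr normr0 mulr_ge0 // ltW.
Qed.

Lemma hd_zx (D : set R) (fv fu : R -> R) (y0 dv du E eps c : R) :
  has_deriv_within D fv y0 dv -> has_deriv_within D fu y0 du ->
  has_deriv_within D (fun y => E * (fv y - fu y) - eps * (c + y ^+ 2)) y0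
    (E * (dv - du) - eps * (2 * y0)).
Proof.
move=> Hv Hu.
have H := hd_add (hd_scale E (hd_add Hv (hd_scale (-1) Hu)))
                 (hd_scale (- eps) (hd_add (@hd_const D c y0) (@hd_sq D y0))).
apply: (hd_ext _ _ H) => [y|]; ring.
Qed.

Lemma hd_zx1 (D : set R) (fv fu : R -> R) (y0 dv du E eps : R) :
  has_deriv_within D fv y0 dv -> has_deriv_within D fu y0 du ->
  has_deriv_within D (fun y => E * (fv y - fu y) - eps * (2 * y)) y0
    (E * (dv - du) - eps * 2).
Proof.
move=> Hv Hu.
have H := hd_add (hd_scale E (hd_add Hv (hd_scale (-1) Hu)))
                 (hd_scale (- eps * 2) (@hd_id D y0)).
apply: (hd_ext _ _ H) => [y|]; ring.
Qed.

Lemma hd_zl (D : set R) (fv fu : R -> R) (m0 dv du E eps K c : R) :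
  has_deriv_within D fv m0 dv -> has_deriv_within D fu m0 du ->
  has_deriv_within D (fun m => E * (fv m - fu m) - eps * (K + 1 - m + c)) m0
    (E * (dv - du) + eps).
Proof.
move=> Hv Hu.
have H := hd_add (hd_scale E (hd_add Hv (hd_scale (-1) Hu)))
                 (hd_add (hd_scale eps (@hd_id D m0)) (@hd_const D (- eps * (K + 1 + c)) m0)).
apply: (hd_ext _ _ H) => [y|]; ring.
Qed.

Lemma argmax_fin (X : Type) (A : X -> Prop) (F : nat -> X -> R) (n : nat) :
  (0 < n)%N ->
  (forall i, (i < n)%N -> exists2 p, A p & forall q, A q -> F i q <= F i p) ->
  exists i, (i < n)%N /\ (exists2 p, A p & forall j q, (j < n)%N -> A q -> F j q <= F i p).
Proof.
elim: n => // n IH _ H.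
have [p Ap Hp] := H n (ltnSn n).
case: n IH H p Ap Hp => [|n] IH H p Ap Hp.
  exists 0%N; split => //; exists p => // j q; rewrite ltnS leqn0 => /eqP -> Aq.
  exact: Hp.
have [|i [ilt [p' Ap' Hp']]] := IH isT.
  by move=> i ilt; apply: H; rewrite ltnS ltnW.
have [le|lt] := leP (F i p') (F n.+1 p).
  exists n.+1; split => //; exists p => // j q.
  rewrite ltnS leq_eqVlt => /orP[/eqP -> |jlt] Aq; first exact: Hp.
  exact: le_trans (Hp' j q jlt Aq) le.
exists i; split; first by rewrite ltnS ltnW.
exists p' => // j q.
rewrite ltnS leq_eqVlt => /orP[/eqP -> |jlt] Aq; last exact: Hp'.
exact: le_trans (Hp q Aq) (ltW lt).
Qed.

Lemma unif_bound (n : nat) (P : nat -> R -> Prop) :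
  (forall i C C', C <= C' -> P i C -> P i C') ->
  (forall i, (i < n)%N -> exists C, P i C) ->
  exists2 C, 0 <= C & forall i, (i < n)%N -> P i C.
Proof.
move=> mon; elim: n => [|n IH] H; first by exists 0.
have [|C C0 HC] := IH; first by move=> i ilt; apply: H; rewrite ltnW.
have [C' HC'] := H n (ltnSn n).
exists (Num.max C C'); first by rewrite le_max C0.
move=> i; rewrite ltnS leq_eqVlt => /orP[/eqP -> |ilt].
  by apply: mon HC'; rewrite le_max lexx orbT.
by apply: mon (HC i ilt); rewrite le_max lexx.
Qed.

Lemma lip_bound (T Rad K : R) (f : R -> R -> R -> R) :
  0 <= T -> 0 <= Rad -> 0 <= K ->
  lipschitz3 (box_cc T Rad K) f ->
  exists C, forall t x l, box_cc T Rad K t x l -> `|f t x l| <= C.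
Proof.
move=> T0 R0 K0 [L HL].
have b0 : box_cc T Rad K 0 0 0 by rewrite /box_cc /itv_cc /= !lexx T0 R0 K0.
exists (`|f 0 0 0| + `|L| * (T + Rad + K)) => t x l bp.
have := HL _ _ _ _ _ _ b0 bp; rewrite !subr0 => H.
move: bp; rewrite /box_cc /itv_cc /= => -[/andP[t0 tT] [/andP[x0 xR] /andP[l0 lK]]].
have H1 : `|f t x l| <= `|f 0 0 0| + `|f t x l - f 0 0 0|.
  by rewrite -[X in `|X| <= _](subrK (f 0 0 0)) addrC; apply: ler_normD.
apply: (le_trans H1); rewrite lerD2l.
apply: (le_trans H); apply: (le_trans (ler_norm _)); rewrite normrM.
apply: ler_wpM2l => //.
rewrite !ger0_norm ?addr_ge0 //; lra.
Qed.

Lemma small_le0 (w c : R) : 0 < c -> (forall eps, 0 < eps -> w <= eps * c) -> w <= 0.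
Proof.
move=> c0 H; rewrite leNgt; apply/negP => w0.
have := H (w / (2 * c)) (divr_gt0 w0 (mulr_gt0 (ltr0Sn _ 1) c0)).
have -> : w / (2 * c) * c = w / 2 by field; rewrite gt_eqF.
lra.
Qed.

Lemma final_arith (Tt Xx X W a b c lam eps x Rad Ca Cb Cc chi : R) :
  Tt - a * Xx + b * X + c * W <= 0 ->
  0 <= Tt - lam * W ->
  X - eps * (2 * x) = 0 ->
  Xx - eps * 2 <= 0 ->
  0 < W - eps * chi ->
  eps <= eps * chi ->
  0 <= a -> a <= Ca -> `|b| <= Cb -> `|c| <= Cc -> 0 <= x -> x <= Rad -> 0 < eps ->
  0 <= Ca -> 0 <= Cb -> 0 <= Cc -> 0 < Rad ->
  lam = Cc + 2 * (Ca + Rad * Cb) + 1 -> False.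
Proof.
move=> P HT HX HXX M0 ech a0 aC bC cC x0 xR e0 Ca0 Cb0 Cc0 R0 Hlam; subst lam.
have W0 : 0 < W by lra.
have X0 : X = eps * (2 * x) by lra.
have p1 : a * Xx <= Ca * (eps * 2).
  apply: (@le_trans _ _ (a * (eps * 2))); first by apply: ler_wpM2l => //; lra.
  by apply: ler_wpM2r => //; rewrite mulr_ge0 // ltW.
have p2 : - (Cb * (eps * (2 * Rad))) <= b * X.
  have : `|b * X| <= Cb * (eps * (2 * Rad)).
    have Xge : 0 <= X by rewrite X0; apply: mulr_ge0; [exact: ltW | lra].
    rewrite normrM (ger0_norm Xge).
    apply: ler_pM => //; rewrite X0; apply: ler_wpM2l; [exact: ltW | lra].
  by rewrite ler_norml => /andP[].
have p3 : - (Cc * W) <= c * W.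
  have : `|c * W| <= Cc * W by rewrite normrM (gtr0_norm W0); apply: ler_wpM2r => //; exact: ltW.
  by rewrite ler_norml => /andP[].
have p4 : 0 < (2 * (Ca + Rad * Cb) + 1) * (W - eps).
  apply: mulr_gt0; last by lra.
  have : 0 <= Rad * Cb by rewrite mulr_ge0 // ltW.
  lra.
nra.
Qed.

Ltac clear_nonarith := repeat match goal with
  | H : ?P |- _ => lazymatch P with
                   | is_true _ => fail
                   | @eq _ _ _ => fail
                   | _ => clear H
                   end
  end.
Ltac flra := clear_nonarith; lra.


Lemma pt_right (lo x hi del : R) : lo <= x -> x < hi -> 0 < del ->
  exists y, [/\ lo <= y, y < hi, x < y & y - x < del].
Proof.
move=> h1 h2 d0; exists (x + Num.min del (hi - x) / 2).
have m0 : 0 < Num.min del (hi - x) by rewrite lt_min d0 subr_gt0.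
have m1 : Num.min del (hi - x) <= del by rewrite ge_min lexx.
have m2 : Num.min del (hi - x) <= hi - x by rewrite ge_min lexx orbT.
split; lra.
Qed.

Lemma pt_left (lo x hi del : R) : lo < x -> x <= hi -> 0 < del ->
  exists y, [/\ lo < y, y <= hi, y < x & x - y < del].
Proof.
move=> h1 h2 d0; exists (x - Num.min del (x - lo) / 2).
have m0 : 0 < Num.min del (x - lo) by rewrite lt_min d0 subr_gt0.
have m1 : Num.min del (x - lo) <= del by rewrite ge_min lexx.
have m2 : Num.min del (x - lo) <= x - lo by rewrite ge_min lexx orbT.
split; lra.
Qed.
End X.
Tactic Notation "slra" ne_hyp_list(l) := clear - l; lra.
End Helpers.

Module Helpers2.
Import Helpers.
Set Implicit Arguments. Unset Strict Implicit.
Import numFieldNormedType.Exports.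
Section X.
Variable R : realType.
Lemma claim (I : nat) (T Rad K : R) (a b c f : nat -> R -> R -> R -> R)
    (alpha : nat -> R -> R -> R) (r phi : R -> R -> R)
    (u ut ux uxx : nat -> R -> R -> R -> R) (ul : R -> R -> R)
    (v vt vx vxx : nat -> R -> R -> R -> R) (vl : R -> R -> R) (Ca Cb Cc : R) :
  0 < T -> 0 < Rad -> 0 < K -> (0 < I)%N ->
  0 <= Ca -> 0 <= Cb -> 0 <= Cc ->
  (forall i, (i < I)%N -> cont_on3 (box_cc T Rad K) (u i)) ->
  (forall i, (i < I)%N -> cont_on3 (box_cc T Rad K) (v i)) ->
  (forall i j t l, (i < I)%N -> (j < I)%N -> rect_cc T K t l -> u i t 0 l = u j t 0 l) ->
  (forall i j t l, (i < I)%N -> (j < I)%N -> rect_cc T K t l -> v i t 0 l = v j t 0 l) ->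
  (forall i t x l, (i < I)%N -> box_ccco T Rad K t x l ->
     has_deriv_within (itv_cc 0 Rad) (fun y => u i t y l) x (ux i t x l)) ->
  (forall i t x l, (i < I)%N -> box_ccco T Rad K t x l ->
     has_deriv_within (itv_cc 0 Rad) (fun y => v i t y l) x (vx i t x l)) ->
  (forall i t x l, (i < I)%N -> box_oo T Rad K t x l ->
     has_deriv_within (itv_oo 0 T) (fun s => u i s x l) t (ut i t x l) /\
     has_deriv_within (itv_oo 0 Rad) (fun y => ux i t y l) x (uxx i t x l)) ->
  (forall i t x l, (i < I)%N -> box_oo T Rad K t x l ->
     has_deriv_within (itv_oo 0 T) (fun s => v i s x l) t (vt i t x l) /\
     has_deriv_within (itv_oo 0 Rad) (fun y => vx i t y l) x (vxx i t x l)) ->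
  (forall t l, rect_co T K t l ->
     has_deriv_within (itv_co 0 K) (fun m => u 0%N t 0 m) l (ul t l)) ->
  (forall t l, rect_co T K t l ->
     has_deriv_within (itv_co 0 K) (fun m => v 0%N t 0 m) l (vl t l)) ->
  (forall i t x l, (i < I)%N -> box_cc T Rad K t x l -> 0 <= a i t x l /\ a i t x l <= Ca) ->
  (forall i t x l, (i < I)%N -> box_cc T Rad K t x l -> `|b i t x l| <= Cb) ->
  (forall i t x l, (i < I)%N -> box_cc T Rad K t x l -> `|c i t x l| <= Cc) ->
  (forall i t l, (i < I)%N -> rect_cc T K t l -> 0 <= alpha i t l) ->
  (forall t l, rect_cc T K t l -> 0 <= r t l) ->
  (forall i t x l, (i < I)%N -> box_oo T Rad K t x l ->
     0 <= ut i t x l - a i t x l * uxx i t x l + b i t x l * ux i t x l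
          + c i t x l * u i t x l - f i t x l) ->
  (forall t l, itv_oo 0 T t -> itv_oo 0 K l ->
     ul t l + \sum_(i < I) alpha i t l * ux i t 0 l - r t l * u 0%N t 0 l - phi t l <= 0) ->
  (forall i t l, (i < I)%N -> itv_oo 0 T t -> itv_oo 0 K l -> 0 <= ux i t Rad l) ->
  (forall i t x l, (i < I)%N -> box_oo T Rad K t x l ->
     vt i t x l - a i t x l * vxx i t x l + b i t x l * vx i t x l
          + c i t x l * v i t x l - f i t x l <= 0) ->
  (forall t l, itv_oo 0 T t -> itv_oo 0 K l ->
     0 <= vl t l + \sum_(i < I) alpha i t l * vx i t 0 l - r t l * v 0%N t 0 l - phi t l) ->
  (forall i t l, (i < I)%N -> itv_oo 0 T t -> itv_oo 0 K l -> vx i t Rad l <= 0) ->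
  (forall i x l, (i < I)%N -> itv_cc 0 Rad x -> itv_cc 0 K l -> v i 0 x l <= u i 0 x l) ->
  (forall i t x, (i < I)%N -> itv_cc 0 T t -> itv_cc 0 Rad x -> v i t x K <= u i t x K) ->
  forall t0 l0 eps, 0 < t0 < T -> 0 < l0 < K -> 0 < eps ->
  forall i q, (i < I)%N -> boxA 0 t0 0 Rad l0 K q ->
    zf (Cc + 2 * (Ca + Rad * Cb) + 1) eps K (u i) (v i) q <= 0.
Proof.
move=> T0 R0 K0 I0 Ca0 Cb0 Cc0 Hcu Hcv Hju Hjv Hxu Hxv Htu Htv Hlu Hlv
  Ha Hb Hc Halpha Hr Pu Ju Nu Pv Jv Nv Hinit Hterm t0 l0 eps /andP[t00 t0T]
  /andP[l00 l0K] eps0.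
set lam := Cc + 2 * (Ca + Rad * Cb) + 1.
have sub : forall p, boxA 0 t0 0 Rad l0 K p -> box_cc T Rad K p.1.1 p.1.2 p.2.
  move=> p [/andP[h1 h2] h3 /andP[h4 h5]]; rewrite /box_cc /itv_cc /=.
  split; first by apply/andP; split; slra h1 h2 t0T.
  by split => //; apply/andP; split; slra h4 h5 l00.
have [i0 [i0lt [[[t x] l] Ap Hp]]] :
  exists i, (i < I)%N /\ (exists2 p, boxA 0 t0 0 Rad l0 K p &
    forall j q, (j < I)%N -> boxA 0 t0 0 Rad l0 K q ->
      zf lam eps K (u j) (v j) q <= zf lam eps K (u i) (v i) p).
  apply: argmax_fin => // i ilt.
  apply: evt_box; [exact: ltW | exact: ltW | exact: ltW |].
  by apply: zf_cont; [apply: cont3_within (Hcu i ilt) sub | apply: cont3_within (Hcv i ilt) sub].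
suff M0 : zf lam eps K (u i0) (v i0) (t, x, l) <= 0.
  by move=> j q jlt Aq; apply: le_trans (Hp j q jlt Aq) M0.
move: Ap; rewrite /boxA /= => -[/andP[t0' tt0] /andP[x0 xR] /andP[ll0 lK]].
have ht_in : 0 <= t <= t0 by rewrite t0' tt0.
have hx_in : 0 <= x <= Rad by rewrite x0 xR.
have hl_in : l0 <= l <= K by rewrite ll0 lK.
set E := expR (- lam * t).
have E0 : 0 < E by apply: expR_gt0.
have Hz : forall j s y m, (j < I)%N -> 0 <= s <= t0 -> 0 <= y <= Rad -> l0 <= m <= K ->
    expR (- lam * s) * (v j s y m - u j s y m) - eps * (K + 1 - m + y ^+ 2)
    <= E * (v i0 t x l - u i0 t x l) - eps * (K + 1 - l + x ^+ 2).
  move=> j s y m jlt hs hy hm.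
  have := Hp j ((s, y), m) jlt (And3 hs hy hm); by rewrite /zf /unc3 /=.
rewrite /zf /unc3 /= -/E.
rewrite leNgt; apply/negP => M0.
have chi1 : 1 <= K + 1 - l + x ^+ 2.
  have := sqr_ge0 x; slra lK.
have epschi : eps <= eps * (K + 1 - l + x ^+ 2) by rewrite ler_peMr // ltW.
have tT : t < T by slra tt0 t0T.
have lpos : 0 < l by slra ll0 l00.
have lin0 : 0 <= l <= K by rewrite ltW.
have t0T' : 0 <= t <= T by rewrite t0' ltW.
have [t_eq0|t_ne0] := eqVneq t 0.
  have := Hinit i0 x l i0lt hx_in lin0.
  rewrite -t_eq0 => H.
  have : E * (v i0 t x l - u i0 t x l) <= 0 by apply: mulr_ge0_le0; [exact: ltW | slra H].
  slra M0 epschi eps0.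
have tpos : 0 < t by rewrite lt_neqAle eq_sym t_ne0 t0'.
have [l_eqK|l_neK] := eqVneq l K.
  have := Hterm i0 t x i0lt t0T' hx_in.
  rewrite -l_eqK => H.
  have : E * (v i0 t x l - u i0 t x l) <= 0 by apply: mulr_ge0_le0; [exact: ltW | slra H].
  slra M0 epschi eps0.
have lK' : l < K by rewrite lt_neqAle l_neK lK.
have tO : itv_oo 0 T t by rewrite /itv_oo /=; apply/andP; split.
have lO : itv_oo 0 K l by rewrite /itv_oo /=; apply/andP; split.
have rcc : rect_cc T K t l by split.
have lco : itv_co 0 K l by rewrite /itv_co /= ltW.
have ccco : forall y, 0 <= y <= Rad -> box_ccco T Rad K t y l by move=> y hy; split.
have [x_eq0|x_ne0] := eqVneq x 0.
  have HX : forall j, (j < I)%N -> E * (vx j t 0 l - ux j t 0 l) <= 0.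
    move=> j jlt.
    have hy0 : 0 <= (0:R) <= Rad by rewrite lexx ltW.
    have Hd := hd_zx E eps (K + 1 - l) (Hxv j t 0 l jlt (ccco 0 hy0)) (Hxu j t 0 l jlt (ccco 0 hy0)).
    suff H2 : E * (vx j t 0 l - ux j t 0 l) - eps * (2 * 0) <= 0.
      by rewrite !mulr0 subr0 in H2.
    apply: (hd_max_right Hd).
    + move=> del del0; have [y [h1 h2 h3 h4]] := pt_right (lexx 0) R0 del0.
      by exists y; split => //; rewrite /itv_cc /= h1 ltW.
    + move=> y; rewrite /itv_cc /= => hy ypos.
      have := Hz j t y l jlt ht_in hy hl_in.
      rewrite -/E x_eq0 (Hju i0 j t l) // (Hjv i0 j t l) //.
  have HL : E * (vl t l - ul t l) + eps <= 0.
    have rco : rect_co T K t l by split.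
    have Hd := hd_zl E eps K (0 ^+ 2) (Hlv t l rco) (Hlu t l rco).
    apply: (hd_max_right Hd).
    + move=> del del0; have [y [h1 h2 h3 h4]] := pt_right (ltW lpos) lK' del0.
      by exists y; split => //; rewrite /itv_co /= h1 h2.
    + move=> y; rewrite /itv_co /= => /andP[y0 yK] ly.
      have hy : l0 <= y <= K by apply/andP; split; slra ll0 ly yK.
      have := Hz 0%N t 0 y I0 ht_in (ltac:(by rewrite lexx ltW)) hy.
      by rewrite -/E x_eq0 (Hju i0 0%N t l) // (Hjv i0 0%N t l).
  have hJv := Jv t l tO lO.
  have hJu := Ju t l tO lO.
  set Sv := \sum_(i < I) alpha i t l * vx i t 0 l in hJv.
  set Su := \sum_(i < I) alpha i t l * ux i t 0 l in hJu.
  have HS : E * (Sv - Su) <= 0.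
    rewrite /Sv /Su -sumrB mulr_sumr -oppr_ge0 -sumrN; apply: sumr_ge0 => j _.
    rewrite oppr_ge0 (_ : E * _ = alpha j t l * (E * (vx j t 0 l - ux j t 0 l))); last by ring.
    by apply: mulr_ge0_le0; [exact: Halpha | exact: HX].
  move: M0; rewrite x_eq0 (Hju i0 0%N t l) // (Hjv i0 0%N t l) // => M0.
  have rpos := Hr t l rcc.
  have h1 : 0 <= E * ((vl t l - ul t l) + (Sv - Su) - r t l * (v 0%N t 0 l - u 0%N t 0 l)).
    apply: mulr_ge0; [exact: ltW | slra hJv hJu].
  have h2 : 0 <= r t l * (E * (v 0%N t 0 l - u 0%N t 0 l)).
    apply: mulr_ge0 => //.
    have : 0 <= eps * (K + 1 - l + 0 ^+ 2).
      by apply: mulr_ge0; [exact: ltW | rewrite expr0n /=; slra lK].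
    slra M0.
  have e1 : E * ((vl t l - ul t l) + (Sv - Su) - r t l * (v 0%N t 0 l - u 0%N t 0 l))
     = E * (vl t l - ul t l) + E * (Sv - Su) - r t l * (E * (v 0%N t 0 l - u 0%N t 0 l)) by ring.
  slra h1 h2 e1 HL HS eps0.
have xpos : 0 < x by rewrite lt_neqAle eq_sym x_ne0 x0.
have [x_eqR|x_neR] := eqVneq x Rad.
  have hR : 0 <= Rad <= Rad by rewrite lexx ltW.
  have Hd := hd_zx E eps (K + 1 - l) (Hxv i0 t Rad l i0lt (ccco Rad hR)) (Hxu i0 t Rad l i0lt (ccco Rad hR)).
  have H2 : 0 <= E * (vx i0 t Rad l - ux i0 t Rad l) - eps * (2 * Rad).
    apply: (hd_max_left Hd).
    + move=> del del0; have [y [h1 h2 h3 h4]] := pt_left R0 (lexx Rad) del0.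
      by exists y; split => //; rewrite /itv_cc /= h2 ltW.
    + move=> y; rewrite /itv_cc /= => hy yR'.
      have := Hz i0 t y l i0lt ht_in hy hl_in.
      by rewrite -/E x_eqR.
  have h1 := Nv i0 t l i0lt tO lO.
  have h2 := Nu i0 t l i0lt tO lO.
  have h3 : E * (vx i0 t Rad l - ux i0 t Rad l) <= 0.
    by apply: mulr_ge0_le0; [exact: ltW | slra h1 h2].
  have h4 : 0 < eps * (2 * Rad) by apply: mulr_gt0 => //; apply: mulr_gt0.
  slra H2 h3 h4.
have xR' : x < Rad by rewrite lt_neqAle x_neR xR.
have bo : box_oo T Rad K t x l.
  by split => //; split => //; rewrite /itv_oo /=; apply/andP; split.
have [Htv1 Hxxv] := Htv i0 t x l i0lt bo.
have [Htu1 Hxxu] := Htu i0 t x l i0lt bo.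
have [HX HXX] : E * (vx i0 t x l - ux i0 t x l) - eps * (2 * x) = 0 /\
                E * (vxx i0 t x l - uxx i0 t x l) - eps * 2 <= 0.
  apply: (hd_max2 (a:=0) (b:=Rad) (g:=fun y => E * (v i0 t y l - u i0 t y l) - eps * (K + 1 - l + y ^+ 2))
            (g1:=fun y => E * (vx i0 t y l - ux i0 t y l) - eps * (2 * y))).
  - by apply/andP; split.
  - move=> y /andP[y0 yR].
    have hy : 0 <= y <= Rad by rewrite !ltW.
    apply: (hd_sub (D := itv_cc 0 Rad)).
      by move=> z; rewrite /itv_oo /itv_cc /= => /andP[h1 h2]; rewrite !ltW.
    exact: hd_zx (Hxv i0 t y l i0lt (ccco y hy)) (Hxu i0 t y l i0lt (ccco y hy)).
  - exact: hd_zx1 Hxxv Hxxu.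
  - move=> y /andP[y0 yR].
    have hy : 0 <= y <= Rad by rewrite !ltW.
    have := Hz i0 t y l i0lt ht_in hy hl_in.
    by rewrite -/E.
have tint : 0 < t < T by apply/andP; split.
have tnb := itv_oo_nbhs tint.
have hv' := hd_isd tnb Htv1.
have hu' := hd_isd tnb Htu1.
have hl : is_derive t 1 (fun s => - lam * s) (- lam).
  have tnb1 : exists2 eta : R, 0 < eta & forall y, `|y - t| < eta -> [set: R]%classic y.
    by exists 1.
  apply: (hd_isd tnb1).
  exact: (hd_ext (fun y => erefl) (mulr1 _) (hd_scale (- lam) (@hd_id R [set: R]%classic t))).
have hE := is_derive1_comp (is_derive_expR _) hl.
have hW := is_deriveB hv' hu'.
have hM := is_deriveM hE hW.
have HT := @isd_hd R (itv_oo 0 T) _ _ _ hM.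
have Hd := hd_add HT (@hd_const R (itv_oo 0 T) (- (eps * (K + 1 - l + x ^+ 2))) t).
have Hd' : has_deriv_within (itv_oo 0 T)
    (fun s => expR (- lam * s) * (v i0 s x l - u i0 s x l) - eps * (K + 1 - l + x ^+ 2)) t
    (E * (vt i0 t x l - ut i0 t x l) - lam * (E * (v i0 t x l - u i0 t x l))).
  apply: (hd_ext _ _ Hd) => [y //|].
  rewrite /= -/E /GRing.scale /=.
  change (((fun s => v i0 s x l) - (fun s => u i0 s x l)) t) with (v i0 t x l - u i0 t x l).
  ring.
have HTt : 0 <= E * (vt i0 t x l - ut i0 t x l) - lam * (E * (v i0 t x l - u i0 t x l)).
  apply: (hd_max_left Hd').
  + move=> del del0; have [y [h1 h2 h3 h4]] := pt_left tpos (ltW tT) del0.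
    by exists y; split => //; rewrite /itv_oo /= h1 (lt_trans h3 tT).
  + move=> y; rewrite /itv_oo /= => /andP[y0 yT] yt.
    have hs : 0 <= y <= t0 by rewrite ltW //= (le_trans (ltW yt) tt0).
    exact: Hz i0 y x l i0lt hs hx_in hl_in.
have bcc : box_cc T Rad K t x l by split.
have [a0 aC] := Ha i0 t x l i0lt bcc.
have hb := Hb i0 t x l i0lt bcc.
have hc := Hc i0 t x l i0lt bcc.
have hPv := Pv i0 t x l i0lt bo.
have hPu := Pu i0 t x l i0lt bo.
have P : E * ((vt i0 t x l - ut i0 t x l) - a i0 t x l * (vxx i0 t x l - uxx i0 t x l)
    + b i0 t x l * (vx i0 t x l - ux i0 t x l) + c i0 t x l * (v i0 t x l - u i0 t x l)) <= 0.
  apply: mulr_ge0_le0; [exact: ltW | slra hPv hPu].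
have eP : E * ((vt i0 t x l - ut i0 t x l) - a i0 t x l * (vxx i0 t x l - uxx i0 t x l)
    + b i0 t x l * (vx i0 t x l - ux i0 t x l) + c i0 t x l * (v i0 t x l - u i0 t x l))
  = E * (vt i0 t x l - ut i0 t x l) - a i0 t x l * (E * (vxx i0 t x l - uxx i0 t x l))
    + b i0 t x l * (E * (vx i0 t x l - ux i0 t x l)) + c i0 t x l * (E * (v i0 t x l - u i0 t x l)).
  by ring.
rewrite eP in P.
exact: (final_arith P HTt HX HXX M0 epschi a0 aC hb hc x0 xR eps0 Ca0 Cb0 Cc0 R0 erefl).
Qed.
End X.
End Helpers2.

Theorem theorem2p6 (R : realType) (I : nat) (T Rad K : R)
    (a b c f : nat -> R -> R -> R -> R) (alpha : nat -> R -> R -> R)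
    (r phi : R -> R -> R) (psi g : nat -> R -> R -> R) (abar alphabar : R)
    (u ut ux uxx : nat -> R -> R -> R -> R) (ul : R -> R -> R)
    (v vt vx vxx : nat -> R -> R -> R -> R) (vl : R -> R -> R) :
  0 < T -> 0 < Rad -> 0 < K -> (2 <= I)%N ->
  data_assump I T Rad K a b c f alpha r phi psi g abar alphabar ->
  C120 I T Rad K u ut ux uxx ul ->
  C120 I T Rad K v vt vx vxx vl ->
  (* u super solution *)
  (forall i t x l, (i < I)%N -> box_oo T Rad K t x l ->
     0 <= ut i t x l - a i t x l * uxx i t x l + b i t x l * ux i t x l
          + c i t x l * u i t x l - f i t x l) ->
  (forall t l, itv_oo 0 T t -> itv_oo 0 K l ->
     ul t l + \sum_(i < I) alpha i t l * ux i t 0 l - r t l * u 0%N t 0 l - phi t l <= 0) ->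
  (forall i t l, (i < I)%N -> itv_oo 0 T t -> itv_oo 0 K l -> 0 <= ux i t Rad l) ->
  (* v sub solution *)
  (forall i t x l, (i < I)%N -> box_oo T Rad K t x l ->
     vt i t x l - a i t x l * vxx i t x l + b i t x l * vx i t x l
          + c i t x l * v i t x l - f i t x l <= 0) ->
  (forall t l, itv_oo 0 T t -> itv_oo 0 K l ->
     0 <= vl t l + \sum_(i < I) alpha i t l * vx i t 0 l - r t l * v 0%N t 0 l - phi t l) ->
  (forall i t l, (i < I)%N -> itv_oo 0 T t -> itv_oo 0 K l -> vx i t Rad l <= 0) ->
  (* initial and terminal (l = K) ordering *)
  (forall i x l, (i < I)%N -> itv_cc 0 Rad x -> itv_cc 0 K l -> v i 0 x l <= u i 0 x l) ->
  (forall i t x, (i < I)%N -> itv_cc 0 T t -> itv_cc 0 Rad x -> v i t x K <= u i t x K) ->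
  forall i t x l, (i < I)%N -> box_cc T Rad K t x l -> v i t x l <= u i t x l.
Proof.
move=> T0 R0 K0 I2 HD HCu HCv Pu Ju Nu Pv Jv Nv Hinit Hterm.
have I0 : (0 < I)%N by apply: leq_trans I2.
move: HD => [Hlip [_ [_ [[abar0 Habar] [_ [Halpha [Hr _]]]]]]].
move: HCu => [Hju [Hcu [Hxu [Htu [[_ [Hlu _]] _]]]]].
move: HCv => [Hjv [Hcv [Hxv [Htv [[_ [Hlv _]] _]]]]].
have mon : forall (h : nat -> R -> R -> R -> R) i (C C' : R), C <= C' ->
    (forall t x l, box_cc T Rad K t x l -> `|h i t x l| <= C) ->
    (forall t x l, box_cc T Rad K t x l -> `|h i t x l| <= C').
  by move=> h i C C' le H t x l bp; exact: le_trans (H t x l bp) le.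
have [Ca Ca0 HCa] := Helpers.unif_bound (n := I)
   (P := fun i C => forall t x l, box_cc T Rad K t x l -> `|a i t x l| <= C) (mon a)
   (fun i ilt => let: And4 ha _ _ _ := Hlip i ilt in
      Helpers.lip_bound (ltW T0) (ltW R0) (ltW K0) ha).
have [Cb Cb0 HCb] := Helpers.unif_bound (n := I)
   (P := fun i C => forall t x l, box_cc T Rad K t x l -> `|b i t x l| <= C) (mon b)
   (fun i ilt => let: And4 _ hb _ _ := Hlip i ilt in
      Helpers.lip_bound (ltW T0) (ltW R0) (ltW K0) hb).
have [Cc Cc0 HCc] := Helpers.unif_bound (n := I)
   (P := fun i C => forall t x l, box_cc T Rad K t x l -> `|c i t x l| <= C) (mon c)
   (fun i ilt => let: And4 _ _ hc _ := Hlip i ilt in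
      Helpers.lip_bound (ltW T0) (ltW R0) (ltW K0) hc).
have HaI : forall i t x l, (i < I)%N -> box_cc T Rad K t x l -> 0 <= a i t x l /\ a i t x l <= Ca.
  move=> i t x l ilt bp; have h1 := Habar i t x l ilt bp; have h2 := HCa i ilt t x l bp.
  split; first by apply: le_trans h1; exact: ltW.
  by apply: le_trans h2; exact: ler_norm.
have Hcl := @Helpers2.claim R I T Rad K a b c f alpha r phi u ut ux uxx ul v vt vx vxx vl Ca Cb Cc
  T0 R0 K0 I0 Ca0 Cb0 Cc0 Hcu Hcv Hju Hjv
  (fun i t x l ilt bp => (Hxu i ilt).1 t x l bp) (fun i t x l ilt bp => (Hxv i ilt).1 t x l bp)
  (fun i t x l ilt bp => (Htu i ilt).1 t x l bp) (fun i t x l ilt bp => (Htv i ilt).1 t x l bp)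
  Hlu Hlv HaI (fun i t x l ilt bp => HCb i ilt t x l bp) (fun i t x l ilt bp => HCc i ilt t x l bp)
  Halpha Hr Pu Ju Nu Pv Jv Nv Hinit Hterm.
move=> i t x l ilt bp.
rewrite leNgt; apply/negP => d0.
have d20 : 0 < (v i t x l - u i t x l) / 2 by rewrite divr_gt0 // subr_gt0.
have [delu delu0 Hu] := Hcu i ilt t x l bp _ d20.
have [delv delv0 Hv] := Hcv i ilt t x l bp _ d20.
set del := Num.min delu delv.
have del0 : 0 < del by rewrite lt_min delu0 delv0.
move: (bp) => [/andP[t0 tT] [/andP[x0 xR] /andP[l0 lK]]].
have [t' /andP[t'0 t'T] ht'] : exists2 t', 0 < t' < T & `|t' - t| < del.
  have [tlt|teq] := ltP t T.
    have [y [h1 h2 h3 h4]] := Helpers.pt_right t0 tlt del0.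
    exists y; first by rewrite h2 (le_lt_trans t0 h3).
    by rewrite gtr0_norm // subr_gt0.
  have [y [h1 h2 h3 h4]] := Helpers.pt_left T0 (lexx T) del0.
  have tE : t = T by apply/eqP; rewrite eq_le tT teq.
  exists y; first by rewrite h1 h3.
  by rewrite tE ltr0_norm ?subr_lt0 // opprB.
have [l' /andP[l'0 l'K] hl'] : exists2 l', 0 < l' <= K & `|l' - l| < del.
  have [llt|leq] := ltP l K.
    have [y [h1 h2 h3 h4]] := Helpers.pt_right l0 llt del0.
    exists y; first by rewrite (ltW h2) (le_lt_trans l0 h3).
    by rewrite gtr0_norm // subr_gt0.
  by exists K; [rewrite K0 lexx | rewrite (_ : l = K) ?subrr ?normr0 //; apply/eqP; rewrite eq_le lK leq].
have bp' : box_cc T Rad K t' x l'.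
  split; first by rewrite /itv_cc /= !ltW.
  split; first by rewrite /itv_cc /= x0 xR.
  by rewrite /itv_cc /= l'K ltW.
have hx0 : `|x - x| < del by rewrite subrr normr0.
have hdu : del <= delu by rewrite ge_min lexx.
have hdv : del <= delv by rewrite ge_min lexx orbT.
have hu := Hu t' x l' bp' (lt_le_trans ht' hdu) (lt_le_trans hx0 hdu) (lt_le_trans hl' hdu).
have hv := Hv t' x l' bp' (lt_le_trans ht' hdv) (lt_le_trans hx0 hdv) (lt_le_trans hl' hdv).
have pos : 0 < v i t' x l' - u i t' x l'.
  move: hu hv; rewrite !ltr_norml => /andP[hu1 hu2] /andP[hv1 hv2]; lra.
have t'in : itv_cc 0 T t' by rewrite /itv_cc /= !ltW.
have xin : itv_cc 0 Rad x by rewrite /itv_cc /= x0 xR.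
have [l'eq|l'ne] := eqVneq l' K.
  have := Hterm i t' x ilt t'in xin; rewrite -l'eq; lra.
have l'lt : l' < K by rewrite lt_neqAle l'ne l'K.
set w := expR (- (Cc + 2 * (Ca + Rad * Cb) + 1) * t') * (v i t' x l' - u i t' x l').
have chi0 : 0 < K + 1 - l' + x ^+ 2 by have := sqr_ge0 x; lra.
have : w <= 0.
  apply: (Helpers.small_le0 chi0) => eps eps0.
  have Hq : Helpers.boxA 0 t' 0 Rad l' K ((t', x), l').
    by rewrite /Helpers.boxA /= !lexx (ltW t'0) x0 xR (ltW l'lt).
  have := Hcl t' l' eps (ltac:(by rewrite t'0 t'T)) (ltac:(by rewrite l'0 l'lt)) eps0 i _ ilt Hq.
  rewrite /Helpers.zf /unc3 /= -/w; lra.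
rewrite /w; have := expR_gt0 (- (Cc + 2 * (Ca + Rad * Cb) + 1) * t').
move=> e0 h; have : 0 < expR (- (Cc + 2 * (Ca + Rad * Cb) + 1) * t') * (v i t' x l' - u i t' x l').
  by apply: mulr_gt0.
lra.
Qed.
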